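(* Let $F=F_2$ be the free group on $x,y$, $F^{(1)}=[F,F]$, $F^{(2)}=[F^{(1)},F^{(1)}]$, and let $w\in F^{(1)}\setminus F^{(2)}$. Then the rational functions $\Phi_w(\lambda,\mu)$ and $\Psi_w(\lambda,\mu)$ defined below are both nonzero and are linearly independent (over $\mathbb{C}$).
   Context: Write $[a,b]=aba^{-1}b^{-1}$ and $w_{n,m}=[x^n,y^m]$ for nonzero integers $n,m$. The elements $w_{n,m}$ ($n,m\neq 0$) freely generate $F^{(1)}$, so every $w\in F^{(1)}$ has a unique shortest (reduced) expression $w=\prod_{i=1}^r w_{n_i,m_i}^{s_i}$ with $s_i\neq 0$. Let $\mathrm{Supp}(w)$ be the set of pairs $(n,m)$ for which $w_{n,m}$ occurs in this expression, and $R_w(n,m)$ the sum of the exponents $s_i$ over all occurrences of $w_{n,m}$. Define $$\Phi_w(\lambda,\mu)=\sum_{(\alpha,\beta)\in \mathrm{Supp}(w)} R_w(\alpha,\beta)\,\mathrm{sgn}(\alpha)\,(1-\mu^{2\beta})\,\frac{(\lambda^{2|\alpha|}-1)\lambda^{\alpha}}{\lambda^{|\alpha|-1}(\lambda^2-1)},$$ $$\Psi_w(\lambda,\mu)=\sum_{(\alpha,\beta)\in \mathrm{Supp}(w)} R_w(\alpha,\beta)\,\mathrm{sgn}(\beta)\,(\lambda^{2\alpha}-1)\,\frac{(\mu^{2|\beta|}-1)\mu^{\beta}}{\mu^{|\beta|-1}(\mu^2-1)}.$$ *)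

(* Defs.v *)
From HB Require Import structures.
From mathcomp Require Import all_boot all_order all_algebra all_field.
Set Implicit Arguments. Unset Strict Implicit. Unset Printing Implicit Defensive.
Import Order.TTheory GRing.Theory Num.Theory.
Local Open Scope ring_scope.

(* A letter is (g, e): g = false for x, g = true for y; e = true means inverse. *)
Definition letter := (bool * bool)%type.
Definition word := seq letter.

Definition cancel_cons (a : letter) (l : word) : word :=
  if l is b :: l' then (if b == (a.1, ~~ a.2) then l' else a :: l) else [:: a].

Definition fnorm (s : word) : word := foldr cancel_cons [::] s.
Definition freduced (s : word) : bool := fnorm s == s.

Definition fmul (u v : word) : word := fnorm (u ++ v).
Definition finv (u : word) : word := rev (map (fun a : letter => (a.1, ~~ a.2)) u).
Definition fpow (u : word) (n : int) : word :=
  fnorm (flatten (nseq `|n|%N (if (0 <= n)%R then u else finv u))).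
Definition fx : word := [:: (false, false)].
Definition fy : word := [:: (true, false)].
Definition fcomm (a b : word) : word := fnorm (a ++ b ++ finv a ++ finv b).

Inductive gen_subgroup (S : word -> Prop) : word -> Prop :=
  | gs_one : gen_subgroup S [::]
  | gs_mem u : S u -> gen_subgroup S u
  | gs_mul u v : gen_subgroup S u -> gen_subgroup S v -> gen_subgroup S (fmul u v)
  | gs_inv u : gen_subgroup S u -> gen_subgroup S (finv u).

Definition F1 : word -> Prop :=
  gen_subgroup (fun c => exists a b, freduced a /\ freduced b /\ c = fcomm a b).
Definition F2 : word -> Prop :=
  gen_subgroup (fun c => exists a b, F1 a /\ F1 b /\ c = fcomm a b).

Definition wnm (n m : int) : word := fcomm (fpow fx n) (fpow fy m).

(* an expression prod_i w_{n_i,m_i}^{s_i} is a list of ((n_i, m_i), s_i) *)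
Definition wexpr := seq ((int * int) * int).

Definition wexpr_eval (e : wexpr) : word :=
  foldr (fun t acc => fmul (fpow (wnm t.1.1 t.1.2) t.2) acc) [::] e.

(* reduced (= shortest) expression: n_i, m_i, s_i nonzero and no two
   consecutive factors with the same generator w_{n,m} *)
Definition wexpr_reduced (e : wexpr) : bool :=
  all (fun t => [&& t.1.1 != 0, t.1.2 != 0 & t.2 != 0]) e &&
  sorted (fun t t' => t.1 != t'.1) e.

Definition Supp (e : wexpr) : seq (int * int) := undup (map fst e).
Definition Rw (e : wexpr) (p : int * int) : int :=
  \sum_(t <- e | t.1 == p) t.2.

Definition RatF := {fraction {poly {poly algC}}}.
Definition lam : RatF := tofrac (('X : {poly algC})%:P).
Definition mu : RatF := tofrac ('X : {poly {poly algC}}).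
Definition cst (c : algC) : RatF := tofrac ((c%:P)%:P).

Definition Phi (e : wexpr) : RatF :=
  \sum_(p <- Supp e)
    ((Rw e p)%:~R * (Num.sg p.1)%:~R * (1 - mu ^ (2 * p.2))
     * ((lam ^ (2 * `|p.1|) - 1) * lam ^ p.1)
     / (lam ^ (`|p.1| - 1) * (lam ^+ 2 - 1))).

Definition Psi (e : wexpr) : RatF :=
  \sum_(p <- Supp e)
    ((Rw e p)%:~R * (Num.sg p.2)%:~R * (lam ^ (2 * p.1) - 1)
     * ((mu ^ (2 * `|p.2|) - 1) * mu ^ p.2)
     / (mu ^ (`|p.2| - 1) * (mu ^+ 2 - 1))).

(* Main.v *)
Require Import Defs.
From HB Require Import structures.
From mathcomp Require Import all_boot all_order all_algebra all_field.
Import Order.TTheory GRing.Theory Num.Theory.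
From mathcomp Require Import zify ring.
Set Implicit Arguments. Unset Strict Implicit. Unset Printing Implicit Defensive.
Local Notation finv := Defs.finv.
Definition linv (a : letter) : letter := (a.1, ~~ a.2).
Definition lrel (a b : letter) : bool := b != linv a.
Definition red (s : word) : bool := sorted lrel s.
Definition act (s r : word) : word := foldr cancel_cons r s.

Lemma linvK a : linv (linv a) = a.
Proof. by case: a => x y; rewrite /linv /= negbK. Qed.

Lemma red_cc a r : red r -> red (cancel_cons a r).
Proof.
case: r => [|b r] //= Hr.
case: eqP => Hb; first by move: Hr; case: r => //= c r /andP[].
by rewrite /red /= Hr andbT /lrel; apply/eqP.
Qed.

Lemma red_act s r : red r -> red (act s r).
Proof. by elim: s => //= a s IH Hr; apply: red_cc; apply: IH. Qed.

Lemma red_fnorm s : red (fnorm s).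
Proof. exact: red_act. Qed.

Lemma fnorm_red r : red r -> fnorm r = r.
Proof.
elim: r => //= a r IH Hr.
have Hr' : red r by move: Hr; case: r {IH} => //= b r /andP[].
rewrite IH //; case: r Hr {IH Hr'} => //= b r /andP[Hab _].
by rewrite /lrel in Hab; rewrite (negbTE Hab).
Qed.

Lemma freducedE u : freduced u = red u.
Proof.
apply/idP/idP => [/eqP <-|H]; first exact: red_fnorm.
by rewrite /freduced fnorm_red.
Qed.

Lemma cc_inv a r : red r -> cancel_cons a (cancel_cons (linv a) r) = r.
Proof.
case: a => a1 a2.
case: r => [|b r] /=; first by rewrite eqxx.
rewrite /linv /= negbK.
case: eqP => [->|Hb] Hr.
  case: r Hr => [|c r] //= /andP[Hc _].
  by rewrite /lrel /linv in Hc; rewrite (negbTE Hc).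
by rewrite /= eqxx.
Qed.

Lemma cc_inv' a r : red r -> cancel_cons (linv a) (cancel_cons a r) = r.
Proof. by move=> Hr; rewrite -{2}(linvK a) cc_inv. Qed.

Lemma act_cat s t r : act (s ++ t) r = act s (act t r).
Proof. exact: foldr_cat. Qed.

Lemma fnorm_cat s t : fnorm (s ++ t) = act s (fnorm t).
Proof. exact: foldr_cat. Qed.

Lemma act_cc a u r : red r -> act (cancel_cons a u) r = cancel_cons a (act u r).
Proof.
move=> Hr; case: u => [|b u] //=.
case: eqP => [->|] //=.
by rewrite -[(a.1, ~~ a.2)]/(linv a) cc_inv //; apply: red_act.
Qed.

Lemma act_fnorm s r : red r -> act (fnorm s) r = act s r.
Proof.
move=> Hr; elim: s => //= a s IH.
by rewrite act_cc // IH.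
Qed.

Lemma finv_cons a s : finv (a :: s) = finv s ++ [:: linv a].
Proof. by rewrite /finv /= rev_cons cats1. Qed.

Lemma finvK s : finv (finv s) = s.
Proof.
rewrite /finv map_rev revK -map_comp.
by rewrite -[RHS]map_id; apply: eq_map => -[a1 a2]; rewrite /= negbK.
Qed.

Lemma act_inv s r : red r -> act (s ++ finv s) r = r.
Proof.
elim: s r => //= a s IH r Hr.
rewrite finv_cons catA act_cat /= IH ?cc_inv //.
exact: red_cc.
Qed.

Lemma act_inv' s r : red r -> act (finv s ++ s) r = r.
Proof. by move=> Hr; rewrite -{2}(finvK s) act_inv. Qed.

Lemma red_finv s : red s -> red (finv s).
Proof.
rewrite /red /finv => H.
rewrite rev_sorted sorted_map.
apply: sub_sorted H => a b; rewrite /lrel /linv /= => Hab.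
apply/eqP => -[E1 E2]; move/eqP: Hab; apply.
by case: a b E1 E2 => [a1 a2] [b1 b2] /= -> ->; rewrite negbK.
Qed.

Lemma gen_red S u : (forall v, S v -> red v) -> gen_subgroup S u -> red u.
Proof.
move=> HS; elim => //=.
- by move=> ? ? _ _ _ _; apply: red_fnorm.
- by move=> v _; apply: red_finv.
Qed.

Lemma fnorm_catl s t : fnorm (fnorm s ++ t) = fnorm (s ++ t).
Proof. by rewrite !fnorm_cat act_fnorm // red_fnorm. Qed.

Lemma fnorm_catr s t : fnorm (s ++ fnorm t) = fnorm (s ++ t).
Proof. by rewrite !fnorm_cat fnorm_red // red_fnorm. Qed.

Definition uw (q : (int * int) * bool) : word :=
  if q.2 then finv (wnm q.1.1 q.1.2) else wnm q.1.1 q.1.2.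
Definition flat (L : seq ((int * int) * bool)) : word := flatten (map uw L).
Definition net (L : seq ((int * int) * bool)) (q : int * int) : int :=
  \sum_(x <- L | x.1 == q) (if x.2 then (-1)%R else 1%R).

Lemma F1_wnm n m : F1 (wnm n m).
Proof.
apply: gs_mem; exists (fpow fx n), (fpow fy m).
by rewrite !freducedE !red_fnorm.
Qed.

Lemma F1_uw x : F1 (uw x).
Proof. by rewrite /uw; case: ifP => _; [apply: gs_inv|]; apply: F1_wnm. Qed.

Lemma F1_flat L : F1 (fnorm (flat L)).
Proof.
elim: L => [|x L IH] /=; first exact: gs_one.
rewrite /flat /= -fnorm_catr -/(flat L).
have := gs_mul (F1_uw x) IH.
by rewrite /fmul.
Qed.

Lemma key_step u a b : F1 u -> F1 (fnorm a) -> F2 (fnorm (a ++ b)) ->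
  F2 (fnorm (u ++ a ++ finv u ++ b)).
Proof.
move=> Hu Ha Hab.
have H := gs_mul (gs_mem (ex_intro _ u (ex_intro _ (fnorm a) (conj Hu (conj Ha erefl))))) Hab.
suff <- : fmul (fcomm u (fnorm a)) (fnorm (a ++ b)) = fnorm (u ++ a ++ finv u ++ b) by [].
rewrite /fmul /fcomm fnorm_catl fnorm_catr -!catA !fnorm_cat.
have Hr : red (fnorm b) by apply: red_fnorm.
rewrite -(act_fnorm a Hr) -(act_cat (finv (fnorm a)) (fnorm a)) act_inv' //.
by rewrite -(act_fnorm a (red_act _ Hr)).
Qed.

Lemma net_cons x L q : net (x :: L) q =
  ((if x.1 == q then (if x.2 then (-1)%R else 1%R) else 0%R) + net L q)%R.
Proof. by rewrite /net big_cons; case: ifP; rewrite ?add0r. Qed.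

Lemma net_cat A B q : net (A ++ B) q = (net A q + net B q)%R.
Proof. by rewrite /net big_cat. Qed.

Lemma net_nomem L p e : (p, ~~ e) \notin L ->
  net L p = ((count (fun y => y.1 == p) L)%:Z * (if e then (-1)%R else 1%R))%R.
Proof.
elim: L => [|[p' e'] L IH] /=; first by rewrite /net big_nil mul0r.
rewrite in_cons negb_or => /andP[Hne Hn].
rewrite net_cons IH //= .
case: eqP => [Ep|_] /=; last by rewrite add0r.
subst p'.
have -> : e' = e by clear IH Hn; move: Hne; case: e e' => [] [] //; rewrite eqxx.
by clear IH Hn Hne; case: e; rewrite ?mulrN1 ?mulr1; lia.
Qed.

Lemma F2_net L : (forall q, net L q = 0%R) -> F2 (fnorm (flat L)).
Proof.
move: {2}(size L) (leqnn (size L)) => n; elim: n L => [|n IH] [|x L] //=;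
  try by move=> *; exact: gs_one.
move=> Hsz Hnet; case: x Hnet => p e Hnet.
have Hin : (p, ~~ e) \in L.
  apply/negPn/negP => Hn; have := Hnet p.
  rewrite net_cons eqxx /= (net_nomem (e:=e)) //.
  by clear Hnet Hn Hsz IH; case: e; rewrite ?mulrN1 ?mulr1; lia.
case/splitPr: Hin Hsz Hnet => A B Hsz Hnet.
have -> : flat ((p, e) :: A ++ (p, ~~ e) :: B) =
   uw (p, e) ++ flat A ++ finv (uw (p, e)) ++ flat B.
  rewrite /flat /= map_cat flatten_cat /=.
  by congr (_ ++ _ ++ _ ++ _); destruct e; rewrite /uw /= ?finvK.
apply: key_step; [exact: F1_uw | exact: F1_flat |].
have -> : flat A ++ flat B = flat (A ++ B) by rewrite /flat map_cat flatten_cat.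
apply: IH; first by move: Hsz; rewrite !size_cat /=; lia.
move=> q; have := Hnet q.
rewrite net_cons !net_cat net_cons /=.
case: (p == q); destruct e => /= H; rewrite -H; ring.
Qed.

Definition expand (e : wexpr) : seq ((int * int) * bool) :=
  flatten (map (fun t => nseq `|t.2|%N (t.1, (t.2 < 0)%R)) e).

Lemma flat_cat A B : flat (A ++ B) = flat A ++ flat B.
Proof. by rewrite /flat map_cat flatten_cat. Qed.

Lemma eval_expand e : wexpr_eval e = fnorm (flat (expand e)).
Proof.
elim: e => [|t e IH] //=.
rewrite /expand /= -/(expand e) flat_cat /fmul IH fnorm_catr /fpow fnorm_catl.
congr (fnorm (_ ++ _)).
rewrite /flat map_nseq /uw /= ltNge.
by case: (0 <= t.2)%R.
Qed.

Lemma net_nseq n x q : net (nseq n x) q =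
  ((if x.1 == q then (if x.2 then (-1)%R else 1%R) else 0%R) *+ n)%R.
Proof.
elim: n => [|n IH]; first by rewrite /net big_nil mulr0n.
by rewrite /= net_cons IH mulrS.
Qed.

Lemma net_expand e q : net (expand e) q = Rw e q.
Proof.
elim: e => [|t e IH]; first by rewrite /net /Rw !big_nil.
rewrite /expand /= -/(expand e) net_cat IH net_nseq /Rw big_cons /=.
case: (t.1 == q); last by rewrite mul0rn add0r.
congr (_ + _)%R.
case: t => [p [n|n]] /=; first by rewrite natz.
by rewrite NegzE mulNrn natz.
Qed.

Lemma exists_nonzero w e : ~ F2 w -> wexpr_eval e = w ->
  exists2 p, p \in Supp e & Rw e p != 0%R.
Proof.
move=> HF Hw.
case H: (all (fun p => Rw e p == 0%R) (Supp e)); last first.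
  by move/negbT: H => /allPn [p Hp Hr]; exists p.
exfalso; apply: HF; rewrite -Hw eval_expand; apply: F2_net => q.
rewrite net_expand.
case Hq: (q \in Supp e); first by move/allP: H => /(_ q Hq) /eqP.
rewrite /Rw big_seq_cond big1 // => t /andP[Ht /eqP Htq].
move/negbT: Hq; rewrite /Supp mem_undup; case/negP.
by rewrite -Htq; apply: map_f.
Qed.

Local Open Scope ring_scope.
Definition fa (N : nat) (a : int) : nat := ((if (0 < a)%R then N else N - absz a) * 2 + 1)%N.
Definition gexp (N : nat) (b : int) : nat := (if (0 < b)%R then N + absz b else N - absz b)%N.

Lemma tel (R : comNzRingType) (x : R) s k :
  (x ^+ 2 - 1) * \sum_(i < k) x ^+ (s + 2 * i) = x ^+ (s + 2 * k) - x ^+ s.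
Proof.
elim: k => [|k IH]; first by rewrite big_ord0 mulr0 muln0 addn0 subrr.
rewrite big_ord_recr /= mulrDr IH.
have -> : x ^+ (s + 2 * k.+1) = x ^+ (s + 2 * k) * x ^+ 2 by rewrite -exprD; congr (_ ^+ _); lia.
ring.
Qed.

Lemma genF (K : fieldType) (x : K) N (a : int) : x != 0 -> x ^+ 2 - 1 != 0 -> a != 0 ->
  (`|a| <= N)%N ->
  x ^+ (2 * N) * ((x ^ (2 * `|a|) - 1) * x ^ a / (x ^ (`|a| - 1) * (x ^+ 2 - 1)))
  = \sum_(i < `|a|%N) x ^+ (fa N a + 2 * i).
Proof.
move=> x0 x21 a0 aN.
set T := \sum_(i < _) _.
have HT : T = (x ^+ (fa N a + 2 * `|a|) - x ^+ fa N a) / (x ^+ 2 - 1).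
  by rewrite -tel [_ * T]mulrC mulfK.
rewrite HT {HT T}.
case: a a0 aN => [[|k]|k] //= _ HN.
- rewrite /fa /=.
  have -> : (2 * Posz k.+1)%R = Posz (2 * k.+1) by lia.
  have -> : (Posz k.+1 - 1)%R = Posz k by lia.
  rewrite -!exprnP.
  have E1 : x ^+ (2 * k.+1) = (x ^+ k * x) ^+ 2 by rewrite -exprSr -exprM mulnC.
  have E2 : x ^+ ((N * 2 + 1) + 2 * k.+1) = x ^+ (2 * N) * x * (x ^+ k * x) ^+ 2.
    by rewrite -E1 -exprSr -exprD; congr (_ ^+ _); lia.
  have E3 : x ^+ (N * 2 + 1) = x ^+ (2 * N) * x by rewrite -exprSr; congr (_ ^+ _); lia.
  rewrite E1 E2 E3 (exprSr x k).
  have v0 : x ^+ k != 0 by rewrite expf_neq0.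
  move: v0 (x ^+ (2 * N)) => {E1 E2 E3}; move: (x ^+ k) => v v0 P.
  by field; rewrite x21 v0.
- rewrite /fa /=.
  have -> : (2 * `|Negz k|)%R = Posz (2 * k.+1) by lia.
  have -> : (`|Negz k| - 1)%R = Posz k by lia.
  have -> : x ^ Negz k = (x ^+ k.+1)^-1 by [].
  rewrite -!exprnP.
  have E1 : x ^+ (2 * k.+1) = (x ^+ k * x) ^+ 2 by rewrite -exprSr -exprM mulnC.
  have E0 : x ^+ (2 * N) = x ^+ ((N - k.+1) * 2) * (x ^+ k * x) ^+ 2.
    by rewrite -E1 -exprD; congr (_ ^+ _); lia.
  have E2 : x ^+ ((N - k.+1) * 2 + 1 + 2 * k.+1) = x ^+ ((N - k.+1) * 2) * x * (x ^+ k * x) ^+ 2.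
    by rewrite -E1 -exprSr -exprD; congr (_ ^+ _); lia.
  have E3 : x ^+ ((N - k.+1) * 2 + 1) = x ^+ ((N - k.+1) * 2) * x by rewrite exprD expr1.
  rewrite E1 E0 E2 E3 (exprSr x k).
  have v0 : x ^+ k != 0 by rewrite expf_neq0.
  move: v0 (x ^+ ((N - k.+1) * 2)) => {E0 E1 E2 E3}; move: (x ^+ k) => v v0 P.
  by field; rewrite x21 v0 x0.
Qed.

Lemma genG (K : fieldType) (x : K) M (b : int) : x != 0 -> b != 0 -> (`|b| <= M)%N ->
  x ^+ (2 * M) * (1 - x ^ (2 * b)) = x ^+ (2 * M) - x ^+ (2 * gexp M b).
Proof.
move=> x0; case: b => [[|k]|k] //= _ HM; rewrite /gexp /=.
- have -> : (2 * Posz k.+1)%R = Posz (2 * k.+1) by lia.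
  rewrite -exprnP mulrBr mulr1 -exprD; congr (_ - _ ^+ _); lia.
- have -> : (2 * Negz k)%R = (- Posz (2 * k.+1))%R by lia.
  rewrite -exprnN mulrBr mulr1.
  have -> : x ^+ (2 * M) = x ^+ (2 * (M - k.+1)) * x ^+ (2 * k.+1).
    by rewrite -exprD; congr (_ ^+ _); lia.
  by rewrite mulfK // expf_neq0.
Qed.

Definition oddq (N : nat) (a : int) : {poly algC} := \sum_(i < absz a) 'X^(fa N a + 2 * i).
Definition gq (M : nat) (b : int) : {poly algC} := 'X^(2 * M) - 'X^(2 * gexp M b).
Definition i0 (N : nat) (a : int) : nat := if (0 < a)%R then (fa N a + 2 * (absz a).-1)%N else fa N a.

Lemma gexpE M (b : int) : (absz b <= M)%N -> (gexp M b)%:Z = (M%:Z + b)%R.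
Proof. by case: b => [[|n]|n]; rewrite /gexp /=; lia. Qed.

Lemma fa_sep N (a a0 : int) i : a != 0 -> a0 != 0 -> (absz a <= N)%N -> (absz a0 <= N)%N ->
  (absz a <= absz a0)%N -> a != a0 -> (i < absz a)%N -> (fa N a + 2 * i)%N != i0 N a0.
Proof.
rewrite /i0 /fa.
case: a => [[|n]|n]; case: a0 => [[|m]|m] //= _ _; try lia.
Qed.

Lemma coef_oddq0 N a i : (forall i', (i' < absz a)%N -> i != (fa N a + 2 * i')%N) -> (oddq N a)`_i = 0.
Proof.
move=> H; rewrite /oddq coef_sum big1 // => i' _.
by rewrite coefXn (negbTE (H i' (ltn_ord i'))).
Qed.

Lemma coef_oddq1 N a i k : (k < absz a)%N -> i = (fa N a + 2 * k)%N -> (oddq N a)`_i = 1.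
Proof.
move=> Hk ->; rewrite /oddq coef_sum (bigD1 (Ordinal Hk)) //= coefXn eqxx big1 ?addr0 //.
move=> i' Hi'; rewrite coefXn; case: eqP => // E; move: Hi'.
have -> : i' = Ordinal Hk by apply: val_inj => /=; lia.
by rewrite eqxx.
Qed.

Lemma coef_gq M b j : (gq M b)`_j = (j == 2 * M)%N%:R - (j == 2 * gexp M b)%N%:R.
Proof. by rewrite /gq coefB !coefXn. Qed.

Lemma oddq_odd N a i : (oddq N a)`_i != 0 -> odd i.
Proof.
apply: contraR => Hi; apply/eqP; apply: coef_oddq0 => i' _; apply/eqP => E.
move: Hi; rewrite E /fa; set x := (if _ then _ else _).
have -> : (x * 2 + 1 + 2 * i' = ((x + i') * 2).+1)%N by lia.
by rewrite /= oddM andbF.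
Qed.

Lemma gq_even M b j : (gq M b)`_j != 0 -> ~~ odd j.
Proof.
apply: contraR => /negPn Hj; rewrite coef_gq.
have E : forall m, (j == 2 * m)%N = false.
  by move=> m; apply/eqP => E; move: Hj; rewrite E oddM.
by rewrite !E subrr.
Qed.

Lemma seq_argmax (T : eqType) (s : seq T) (P : pred T) (f : T -> nat) :
  (exists2 x, x \in s & P x) ->
  exists x, [/\ x \in s, P x & forall y, y \in s -> P y -> (f y <= f x)%N].
Proof.
elim: s => [|z s IH] [x Hx Px]; first by [].
case Hs: (has P s).
  case/hasP: Hs => y Hy Py; case: IH; first by exists y.
  move=> m [Hm Pm Hmax].
  case Pz: (P z); last first.
    exists m; split; first by rewrite in_cons Hm orbT.
      by [].
    by move=> u; rewrite in_cons => /orP[/eqP ->|]; [rewrite Pz | apply: Hmax].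
  case: (leqP (f z) (f m)) => Hzm.
    exists m; split; first by rewrite in_cons Hm orbT.
      by [].
    by move=> u; rewrite in_cons => /orP[/eqP ->|]; [| apply: Hmax].
  exists z; split; first by rewrite in_cons eqxx.
    by [].
  move=> u; rewrite in_cons => /orP[/eqP -> //|Hu Pu].
  by apply: leq_trans (Hmax u Hu Pu) (ltnW Hzm).
have Pz : P z.
  move: Hx; rewrite in_cons => /orP[/eqP <- //|Hx].
  by move/negbT/hasPn: Hs => /(_ x Hx); rewrite Px.
exists z; split; first by rewrite in_cons eqxx.
  by [].
move=> u; rewrite in_cons => /orP[/eqP -> //|Hu Pu].
by move/negbT/hasPn: Hs => /(_ u Hu); rewrite Pu.
Qed.

Lemma coef_nz (S : seq (int * int)) (c : int * int -> int) N M :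
  uniq S ->
  (forall p, p \in S -> [/\ p.1 != 0, p.2 != 0, (absz p.1 <= N)%N & (absz p.2 <= M)%N]) ->
  (exists2 p, p \in S & c p != 0) ->
  exists i j, \sum_(p <- S) (c p)%:~R * (Num.sg p.1)%:~R * (oddq N p.1)`_i * (gq M p.2)`_j != 0 :> algC.
Proof.
move=> HU HS Hex.
case: (seq_argmax (fun p => absz p.1) Hex) => p0 [Hp0 Pp0 Hmax].
case/HS: (Hp0) => a0nz b0nz a0N b0M.
exists (i0 N p0.1), (2 * gexp M p0.2)%N.
rewrite (bigD1_seq p0) //= big1_seq ?addr0; last first.
  move=> p /andP[Hne Hp].
  case/HS: (Hp) => anz bnz aN bM.
  case Hc: (c p == 0); first by rewrite (eqP Hc) mul0r !mul0r.
  have Hle := Hmax p Hp (negbT Hc).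
  case Hb: (p.2 == p0.2).
    have Ha : p.1 != p0.1.
      by apply: contra Hne => Ea; apply/eqP; apply: injective_projections; apply/eqP.
    rewrite coef_oddq0 ?mulr0 ?mul0r // => i' Hi'.
    by rewrite eq_sym; apply: fa_sep.
  rewrite coef_gq.
  have -> : (2 * gexp M p0.2 == 2 * M)%N = false.
    apply/eqP => E; have : (gexp M p0.2)%:Z = M%:Z by congr Posz; lia.
    by rewrite gexpE //; move/eqP: b0nz; lia.
  have -> : (2 * gexp M p0.2 == 2 * gexp M p.2)%N = false.
    apply/eqP => E; have : (gexp M p0.2)%:Z = (gexp M p.2)%:Z by congr Posz; lia.
    by rewrite !gexpE //; move/negbT/eqP: Hb; lia.
  by rewrite subrr mulr0.
rewrite coef_gq.
have -> : (2 * gexp M p0.2 == 2 * M)%N = false.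
  apply/eqP => E; have : (gexp M p0.2)%:Z = M%:Z by congr Posz; lia.
  by rewrite gexpE //; move/eqP: b0nz; lia.
rewrite eqxx sub0r mulrN1 oppr_eq0.
rewrite (@coef_oddq1 N p0.1 _ (if (0 < p0.1)%R then (absz p0.1).-1 else 0%N)); last first.
- by rewrite /i0; case: ifP => //; rewrite muln0 addn0.
- by case: ifP => _; move: a0nz; case: (p0.1) => [[|n]|n] //=.
rewrite mulr1 mulf_neq0 // intr_eq0 ?sgr_eq0 //.
Qed.

Lemma lam_neq0 : lam != 0.
Proof. by rewrite /lam tofrac_eq0 polyC_eq0 polyX_eq0. Qed.
Lemma mu_neq0 : mu != 0.
Proof. by rewrite /mu tofrac_eq0 polyX_eq0. Qed.

Lemma X21_neq0 (R : idomainType) : ('X ^+ 2 - 1 : {poly R}) != 0.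
Proof.
apply/eqP => H; have := congr1 (fun p : {poly R} => p`_2) H.
by rewrite coefB coefXn coef1 /= subr0 coef0 => /eqP; rewrite oner_eq0.
Qed.

Lemma lam21 : lam ^+ 2 - 1 != 0.
Proof.
have -> : lam ^+ 2 - 1 = tofrac ((('X ^+ 2 - 1) : {poly algC})%:P).
  by rewrite /lam rmorphB rmorph1 rmorphXn /= rmorphB rmorph1 rmorphXn.
by rewrite tofrac_eq0 polyC_eq0 X21_neq0.
Qed.

Lemma mu21 : mu ^+ 2 - 1 != 0.
Proof.
have -> : mu ^+ 2 - 1 = tofrac ('X ^+ 2 - 1).
  by rewrite /mu rmorphB rmorph1 rmorphXn.
by rewrite tofrac_eq0 X21_neq0.
Qed.

Lemma tofracCX n : tofrac (('X ^+ n : {poly algC})%:P) = lam ^+ n.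
Proof. by rewrite /lam !rmorphXn. Qed.
Lemma tofracMX n : tofrac (map_poly polyC ('X ^+ n : {poly algC})) = mu ^+ n.
Proof. by rewrite map_polyXn rmorphXn. Qed.

Lemma tofracCC (k : algC) (q : {poly algC}) : tofrac ((k *: q)%:P) = cst k * tofrac (q%:P).
Proof. by rewrite -mul_polyC !rmorphM. Qed.
Lemma tofracMC (k : algC) (q : {poly algC}) :
  tofrac (map_poly polyC (k *: q)) = cst k * tofrac (map_poly polyC q).
Proof. by rewrite -mul_polyC !rmorphM /= map_polyC. Qed.
Lemma cst_int (z : int) : cst (z%:~R) = z%:~R.
Proof. by rewrite /cst !rmorph_int. Qed.

Lemma tofrac_oddqC N a : tofrac ((oddq N a)%:P) = \sum_(i < absz a) lam ^+ (fa N a + 2 * i).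
Proof. by rewrite /oddq !rmorph_sum; apply: eq_bigr => i _; apply: tofracCX. Qed.
Lemma tofrac_oddqM N a : tofrac (map_poly polyC (oddq N a)) = \sum_(i < absz a) mu ^+ (fa N a + 2 * i).
Proof. by rewrite /oddq !rmorph_sum; apply: eq_bigr => i _; apply: tofracMX. Qed.
Lemma tofrac_gqC N a : tofrac ((gq N a)%:P) = lam ^+ (2 * N) - lam ^+ (2 * gexp N a).
Proof. by rewrite /gq !rmorphB /= !tofracCX. Qed.
Lemma tofrac_gqM N a : tofrac (map_poly polyC (gq N a)) = mu ^+ (2 * N) - mu ^+ (2 * gexp N a).
Proof. by rewrite /gq !rmorphB /= !tofracMX. Qed.

Lemma coef_term (A B : {poly algC}) i j : ((A%:P * map_poly polyC B)`_j)`_i = A`_i * B`_j.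
Proof. by rewrite coefCM coef_map /= coefMC. Qed.

Lemma cst_intM (x y : int) : cst (x%:~R * y%:~R) = x%:~R * y%:~R.
Proof. by rewrite -intrM cst_int intrM. Qed.

Lemma phi_term N M (c a b : int) : a != 0 -> b != 0 -> (absz a <= N)%N -> (absz b <= M)%N ->
  lam ^+ (2 * N) * mu ^+ (2 * M) *
  (c%:~R * (Num.sg a)%:~R * (1 - mu ^ (2 * b)) * ((lam ^ (2 * `|a|) - 1) * lam ^ a)
     / (lam ^ (`|a| - 1) * (lam ^+ 2 - 1)))
  = tofrac ((((c%:~R * (Num.sg a)%:~R : algC)) *: oddq N a)%:P * map_poly polyC (gq M b)).
Proof.
move=> a0 b0 aN bM.
rewrite tofracM tofracCC tofrac_oddqC tofrac_gqM.
rewrite -(genF lam_neq0 lam21 a0 aN) -(genG mu_neq0 b0 bM).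
rewrite cst_intM.
ring.
Qed.

Lemma psi_term N M (c a b : int) : a != 0 -> b != 0 -> (absz a <= N)%N -> (absz b <= M)%N ->
  lam ^+ (2 * N) * mu ^+ (2 * M) *
  (c%:~R * (Num.sg b)%:~R * (lam ^ (2 * a) - 1) * ((mu ^ (2 * `|b|) - 1) * mu ^ b)
     / (mu ^ (`|b| - 1) * (mu ^+ 2 - 1)))
  = tofrac ((((c%:~R : algC)) *: - gq N a)%:P * map_poly polyC (((Num.sg b)%:~R : algC) *: oddq M b)).
Proof.
move=> a0 b0 aN bM.
rewrite tofracM tofracCC tofracMC tofrac_oddqM.
rewrite rmorphN /= rmorphN /= tofrac_gqC.
rewrite -(genF mu_neq0 mu21 b0 bM) -(genG lam_neq0 a0 aN) !cst_int.
ring.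
Qed.

Lemma le_sum_seq (T : eqType) (s : seq T) (f : T -> nat) x : uniq s -> x \in s ->
  (f x <= \sum_(y <- s) f y)%N.
Proof. by move=> Hu Hx; rewrite (bigD1_seq x) //= leq_addr. Qed.

Lemma oddq0 N a i : ~~ odd i -> (oddq N a)`_i = 0.
Proof. by move=> Hi; apply/eqP; rewrite -[_ == 0]negbK; apply/negP => /oddq_odd; rewrite (negbTE Hi). Qed.

Lemma gq0 M b j : odd j -> (gq M b)`_j = 0.
Proof. by move=> Hj; apply/eqP; rewrite -[_ == 0]negbK; apply/negP => /gq_even; rewrite Hj. Qed.

Lemma main_rat (e : wexpr) : wexpr_reduced e -> (exists2 p, p \in Supp e & Rw e p != 0) ->
  [/\ Phi e != 0, Psi e != 0 &
      forall a b : algC, cst a * Phi e + cst b * Psi e = 0 -> a = 0 /\ b = 0].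
Proof.
move=> /andP[Hall _] Hex.
have HU : uniq (Supp e) by apply: undup_uniq.
have HS0 : forall p, p \in Supp e -> p.1 != 0 /\ p.2 != 0.
  move=> p; rewrite /Supp mem_undup => /mapP [t Ht ->].
  by move/allP: Hall => /(_ t Ht) /and3P [].
set N := \sum_(p <- Supp e) absz p.1.
set M := \sum_(p <- Supp e) absz p.2.
have HS : forall p, p \in Supp e ->
    [/\ p.1 != 0, p.2 != 0, (absz p.1 <= N)%N & (absz p.2 <= M)%N].
  move=> p Hp; case: (HS0 p Hp) => H1 H2; split => //.
  - exact: (le_sum_seq (fun q : int * int => absz q.1)).
  - exact: (le_sum_seq (fun q : int * int => absz q.2)).
set Pp := \sum_(p <- Supp e) ((((Rw e p)%:~R * (Num.sg p.1)%:~R : algC)) *: oddq N p.1)%:P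
             * map_poly polyC (gq M p.2).
set Qp := \sum_(p <- Supp e) ((((Rw e p)%:~R : algC)) *: - gq N p.1)%:P
             * map_poly polyC (((Num.sg p.2)%:~R : algC) *: oddq M p.2).
have HP : lam ^+ (2 * N) * mu ^+ (2 * M) * Phi e = tofrac Pp.
  rewrite /Phi mulr_sumr rmorph_sum; apply: eq_big_seq => p Hp.
  by case: (HS p Hp) => *; apply: phi_term.
have HQ : lam ^+ (2 * N) * mu ^+ (2 * M) * Psi e = tofrac Qp.
  rewrite /Psi mulr_sumr rmorph_sum; apply: eq_big_seq => p Hp.
  by case: (HS p Hp) => *; apply: psi_term.
have coefP : forall i j, (Pp`_j)`_i =
    \sum_(p <- Supp e) (Rw e p)%:~R * (Num.sg p.1)%:~R * (oddq N p.1)`_i * (gq M p.2)`_j.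
  move=> i j; rewrite /Pp !coef_sum; apply: eq_bigr => p _.
  by rewrite coef_term coefZ.
have coefQ : forall i j, (Qp`_j)`_i =
    - \sum_(p <- Supp e) (Rw e p)%:~R * (Num.sg p.2)%:~R * (oddq M p.2)`_j * (gq N p.1)`_i.
  move=> i j; rewrite /Qp !coef_sum -sumrN; apply: eq_bigr => p _.
  rewrite coef_term !coefZ coefN; ring.
have indep : forall a b : algC, cst a * Phi e + cst b * Psi e = 0 -> a = 0 /\ b = 0.
  move=> a b H.
  have H2 : tofrac ((a%:P)%:P * Pp + (b%:P)%:P * Qp) = 0.
    have -> : tofrac ((a%:P)%:P * Pp + (b%:P)%:P * Qp) = cst a * tofrac Pp + cst b * tofrac Qp.
      by rewrite rmorphD !rmorphM.
    rewrite -HP -HQ.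
    transitivity (lam ^+ (2 * N) * mu ^+ (2 * M) * (cst a * Phi e + cst b * Psi e)); first by ring.
    by rewrite H mulr0.
  move/eqP: H2; rewrite tofrac_eq0 => /eqP H3.
  have Hc : forall i j, a * (Pp`_j)`_i + b * (Qp`_j)`_i = 0.
    move=> i j; have := congr1 (fun q : {poly {poly algC}} => (q`_j)`_i) H3.
    by rewrite /= coefD !coefCM coefD !coefCM !coef0.
  split.
    case: (coef_nz HU HS Hex) => i [j HX].
    case Hi: (odd i); last first.
      by move: HX; rewrite big1_seq ?eqxx // => p _; rewrite oddq0 ?Hi // mulr0 mul0r.
    move: (Hc i j); rewrite coefQ big1_seq ?oppr0 ?mulr0 ?addr0; last first.
      by move=> p _; rewrite gq0 // mulr0.
    by rewrite coefP => /eqP; rewrite mulf_eq0 (negbTE HX) orbF => /eqP.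
  set sw := fun p : int * int => (p.2, p.1).
  have HU' : uniq (map sw (Supp e)).
    by rewrite map_inj_uniq // => -[? ?] [? ?] [-> ->].
  have HS' : forall p, p \in map sw (Supp e) ->
      [/\ p.1 != 0, p.2 != 0, (absz p.1 <= M)%N & (absz p.2 <= N)%N].
    by move=> p /mapP [q Hq ->]; case: (HS q Hq).
  have Hex' : exists2 p, p \in map sw (Supp e) & Rw e (sw p) != 0.
    by case: Hex => p Hp Hr; exists (sw p); [apply: map_f | case: p Hp Hr].
  case: (coef_nz HU' HS' Hex') => j [i]; rewrite big_map.
  rewrite /sw /=.
  under eq_bigr do rewrite -surjective_pairing.
  move=> HY.
  case Hj: (odd j); last first.
    by move: HY; rewrite big1_seq ?eqxx // => p _; rewrite oddq0 ?Hj // mulr0 mul0r.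
  move: (Hc i j); rewrite coefP big1_seq ?mulr0 ?add0r; last first.
    by move=> p _; rewrite gq0 // mulr0.
  by rewrite coefQ mulrN => /eqP; rewrite oppr_eq0 mulf_eq0 (negbTE HY) orbF => /eqP.
split => //.
- apply/eqP => H0; have [] := indep 1 0.
    by rewrite H0 mulr0 /cst !rmorph0 mul0r addr0.
  by move/eqP; rewrite oner_eq0.
- apply/eqP => H0; have [] := indep 0 1.
    by rewrite H0 mulr0 /cst !rmorph0 mul0r addr0.
  by move=> _ /eqP; rewrite oner_eq0.
Qed.

Unset Implicit Arguments.

Theorem proposition6p2 (w : word) (e : wexpr) :
  freduced w -> F1 w -> ~ F2 w ->
  wexpr_reduced e -> wexpr_eval e = w ->
  [/\ Phi e != 0, Psi e != 0 &
      forall a b : algC, cst a * Phi e + cst b * Psi e = 0 -> a = 0 /\ b = 0].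
Proof.
move=> _ _ HF2 He Hev.
apply: main_rat He _.
exact: exists_nonzero HF2 Hev.
Qed.
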